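(* Let $\mathscr Q_n$ be a non-singular quadric in $\mathrm{PG}(n,2)$ of projective index $g\ge1$, let $0\le s<g$, let $\alpha_s$ be an $s$-dimensional subspace contained in $\mathscr Q_n$, and let $\Gamma_s$ be the graph constructed from $\alpha_s$ as described below. (A) If $\Sigma$ is a generator of $\mathscr Q_n$ containing $\alpha_s$, then the points of $\Sigma$ form a clique of $\Gamma_s$ of size $2^{g+1}-1$. (B) Let $\Pi,\Sigma$ be generators of $\mathscr Q_n$ such that $\alpha_s\subseteq\Sigma$, $\alpha_s\not\subseteq\Pi$, and $\Pi\cap\Sigma$ has dimension $g-1$. Let $\mathcal C_a$ be the set of $2^s-1$ points of $\alpha_s\cap\Pi$, $\mathcal C_b$ the set of $2^g-2^s$ points of $\Sigma$ not in $\alpha_s\cup\Pi$, and $\mathcal C_c$ the set of $2^g$ points of $\Pi\setminus\Sigma$. Then $\mathcal C_a\cup\mathcal C_b\cup\mathcal C_c$ is a clique of $\Gamma_s$ of size $2^{g+1}-1$.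
   Context: A non-singular quadric $\mathscr Q_n$ in $\mathrm{PG}(n,2)$ is the point set of a non-degenerate quadric; its projective index $g$ is the largest dimension of a projective subspace contained in $\mathscr Q_n$, and the $g$-dimensional subspaces contained in $\mathscr Q_n$ are its generators. The point-graph $\Gamma$ has vertex set the points of $\mathscr Q_n$, two distinct points adjacent iff the line joining them is contained in $\mathscr Q_n$. A point $X$ of $\mathscr Q_n$ has type (i) if $X\in\alpha_s$; type (ii) if $X\notin\alpha_s$ and $\langle\alpha_s,X\rangle\subseteq\mathscr Q_n$; type (iii) otherwise. Let $\mathcal X_s$ be the type (ii) points and $\mathcal Y_s$ the points of type (i) or (iii). The graph $\Gamma_s$ has the same vertex set as $\Gamma$ and the same edges, except that for each vertex $R\in\mathcal Y_s$ having exactly $\frac12|\mathcal X_s|$ neighbours in $\mathcal X_s$ (in $\Gamma$), those edges are deleted and $R$ is joined instead to the other $\frac12|\mathcal X_s|$ vertices of $\mathcal X_s$. *)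

(* Defs.v *)
From HB Require Import structures.
From mathcomp Require Import all_boot all_order all_algebra.
Set Implicit Arguments. Unset Strict Implicit. Unset Printing Implicit Defensive.
Import GRing.Theory.
Local Open Scope ring_scope.

(* PG(n,2): vectors of F_2^(n+1); since the field is F_2, every projective
   point is represented by a unique nonzero vector. A projective subspace of
   dimension d is a vector subspace (vspace) of dimension d+1. *)
Notation vec n := 'rV['F_2]_(n.+1).

(* The quadratic form with coefficient matrix A: Q(x) = x A x^T
   = sum_{i,j} a_ij x_i x_j (every quadratic form arises this way). *)
Definition qf n (A : 'M['F_2]_(n.+1)) (x : vec n) : 'F_2 :=
  (x *m A *m x^T) ord0 ord0.

Definition polar n (A : 'M['F_2]_(n.+1)) (x y : vec n) : 'F_2 :=
  qf A (x + y) - qf A x - qf A y.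

Definition nonsingular n (A : 'M['F_2]_(n.+1)) : Prop :=
  forall x : vec n, x != 0 -> qf A x = 0 -> exists y, polar A x y != 0.

Definition on_quadric n (A : 'M['F_2]_(n.+1)) (U : {vspace vec n}) : bool :=
  [forall v : vec n, (v \in U) ==> (qf A v == 0)].

Definition proj_index n (A : 'M['F_2]_(n.+1)) (g : nat) : Prop :=
  (exists U, on_quadric A U /\ \dim U = g.+1) /\
  (forall U, on_quadric A U -> (\dim U <= g.+1)%N).

Definition generator n (A : 'M['F_2]_(n.+1)) (g : nat) (U : {vspace vec n}) :=
  on_quadric A U /\ \dim U = g.+1.

Definition pts n (U : {vspace vec n}) : {set vec n} :=
  [set v : vec n | (v \in U) && (v != 0)].

Definition qpts n (A : 'M['F_2]_(n.+1)) : {set vec n} :=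
  [set v : vec n | (v != 0) && (qf A v == 0)].

Definition adjG n (A : 'M['F_2]_(n.+1)) (x y : vec n) : bool :=
  [&& x \in qpts A, y \in qpts A, x != y & on_quadric A <<[:: x; y]>>%VS].

Definition Xs n (A : 'M['F_2]_(n.+1)) (alpha : {vspace vec n}) : {set vec n} :=
  [set x in qpts A | (x \notin alpha) &&
     on_quadric A (alpha + <[x]>)%VS ].

Definition Ys n (A : 'M['F_2]_(n.+1)) (alpha : {vspace vec n}) : {set vec n} :=
  qpts A :\: Xs A alpha.

Definition switched n (A : 'M['F_2]_(n.+1)) (alpha : {vspace vec n})
    (r : vec n) : bool :=
  (r \in Ys A alpha) &&
  ((#|[set x in Xs A alpha | adjG A r x ]| * 2)%N == #|Xs A alpha|).

Definition adjGs n (A : 'M['F_2]_(n.+1)) (alpha : {vspace vec n})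
    (x y : vec n) : Prop :=
  [/\ x \in qpts A, y \in qpts A, x != y &
   adjG A x y (+)
     ((switched A alpha x && (y \in Xs A alpha)) ||
      (switched A alpha y && (x \in Xs A alpha)))].

Definition clique_Gs n (A : 'M['F_2]_(n.+1)) (alpha : {vspace vec n})
    (C : {set vec n}) : Prop :=
  C \subset qpts A /\
  forall x y, x \in C -> y \in C -> x != y -> adjGs A alpha x y.

(* Main.v *)
Require Import Defs.
From HB Require Import structures.
From mathcomp Require Import all_boot all_order all_algebra all_field.
From mathcomp Require Import ring zify.
Set Implicit Arguments. Unset Strict Implicit. Unset Printing Implicit Defensive.
Import GRing.Theory.
Local Open Scope ring_scope.

Section S.
Variables (n : nat) (A : 'M['F_2]_(n.+1)).

Lemma cardU (U : {vspace vec n}) : #|[set v : vec n | v \in U]| = (2 ^ \dim U)%N.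
Proof. by rewrite cardsE (card_vspace U) card_Fp. Qed.

Lemma F2_cases (k : 'F_2) : k = 0 \/ k = 1.
Proof. by case: k => [[|[|//]]] ? /=; [left|right]; apply/val_inj. Qed.

Definition bil (x y : vec n) : 'F_2 := (x *m A *m y^T) ord0 ord0.

Lemma bilDl x y z : bil (x + y) z = bil x z + bil y z.
Proof. by rewrite /bil !mulmxDl mxE. Qed.
Lemma bilDr x y z : bil x (y + z) = bil x y + bil x z.
Proof. by rewrite /bil linearD /= mulmxDr mxE. Qed.
Lemma bilZl k x z : bil (k *: x) z = k * bil x z.
Proof. by rewrite /bil -!scalemxAl mxE. Qed.
Lemma bilZr k x z : bil x (k *: z) = k * bil x z.
Proof. by rewrite /bil linearZ /= -scalemxAr mxE. Qed.

Lemma qfE x : qf A x = bil x x. Proof. by []. Qed.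
Lemma polarE x y : polar A x y = bil x y + bil y x.
Proof. rewrite /polar !qfE bilDl !bilDr; ring. Qed.
Lemma qfD x y : qf A (x + y) = qf A x + qf A y + polar A x y.
Proof. rewrite /polar; ring. Qed.
Lemma qfZ k x : qf A (k *: x) = k * k * qf A x.
Proof. by rewrite !qfE bilZl bilZr mulrA. Qed.
Lemma polarC x y : polar A x y = polar A y x.
Proof. by rewrite !polarE addrC. Qed.
Lemma polarDr x y z : polar A x (y + z) = polar A x y + polar A x z.
Proof. rewrite !polarE bilDl bilDr; ring. Qed.
Lemma polarZr k x y : polar A x (k *: y) = k * polar A x y.
Proof. rewrite !polarE bilZl bilZr; ring. Qed.

Lemma oqP (U : {vspace vec n}) :
  reflect (forall v, v \in U -> qf A v = 0) (on_quadric A U).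
Proof.
apply: (iffP forallP) => [H v vU | H v]; first by move/implyP: (H v) => /(_ vU)/eqP.
by apply/implyP => /H ->.
Qed.

Lemma oq_sub (U V : {vspace vec n}) : on_quadric A U -> (V <= U)%VS -> on_quadric A V.
Proof. by move=> /oqP H /subvP S; apply/oqP => v /S /H. Qed.

Lemma oq_polar (U : {vspace vec n}) u v :
  on_quadric A U -> u \in U -> v \in U -> polar A u v = 0.
Proof.
move=> /oqP H uU vU; have := H _ (memvD uU vU).
by rewrite qfD (H _ uU) (H _ vU) !add0r.
Qed.

Lemma oq_addline (U : {vspace vec n}) x :
  on_quadric A U -> qf A x = 0 ->
  (on_quadric A (U + <[x]>)%VS <-> forall u, u \in U -> polar A u x = 0).
Proof.
move=> oU qx; split=> [H u uU | H].
  apply: (oq_polar H); first exact: (subvP (addvSl _ _)).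
  by apply: (subvP (addvSr _ _)); exact: memv_line.
apply/oqP => v /memv_addP [u uU [w /vlineP [k ->] ->]].
by rewrite qfD qfZ qx (oqP _ oU _ uU) polarZr H // !mulr0 !addr0.
Qed.

Lemma adjG_E x y : x \in qpts A -> y \in qpts A ->
  adjG A x y = (x != y) && (polar A x y == 0).
Proof.
move=> xQ yQ; rewrite /adjG xQ yQ /=; congr (_ && _).
move: (xQ) (yQ); rewrite !inE => /andP [_ /eqP qx] /andP [_ /eqP qy].
have oX : on_quadric A <[x]> by apply/oqP => v /vlineP [k ->]; rewrite qfZ qx mulr0.
rewrite span_cons span_seq1.
apply/idP/idP => [/(oq_addline oX qy) H | /eqP H].
  by rewrite H // memv_line.
apply/(oq_addline oX qy) => u /vlineP [k ->].
by rewrite polarC polarZr polarC H mulr0.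
Qed.

Lemma dim_addline (U : {vspace vec n}) v : v \notin U ->
  \dim (U + <[v]>)%VS = (\dim U).+1.
Proof.
move=> vU; apply/eqP; rewrite eqn_leq; apply/andP; split.
  have := dimv_add_leqif U <[v]>; rewrite dim_vline.
  have -> : v != 0 by apply: contraNneq vU => ->; rewrite mem0v.
  by rewrite addn1 => [[]].
rewrite (ltn_leqif (dimv_leqif_eq (addvSl U <[v]>))).
apply: contra vU => /eqP ->; exact: (subvP (addvSr _ _) _ (memv_line v)).
Qed.

Lemma addline_eq (U W : {vspace vec n}) v : (U <= W)%VS -> v \in W -> v \notin U ->
  \dim W = (\dim U).+1 -> (U + <[v]>)%VS = W.
Proof.
move=> UW vW vU dW; apply/eqP; rewrite eqEdim dim_addline // dW leqnn andbT.
by rewrite subv_add UW -memvE.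
Qed.
Lemma F2_neq0 (k : 'F_2) : k != 0 -> k = 1.
Proof. by case: (F2_cases k) => ->. Qed.

Lemma qptsE x : (x \in qpts A) = (x != 0) && (qf A x == 0).
Proof. by rewrite inE. Qed.

Lemma pts_qpts (U : {vspace vec n}) v : on_quadric A U -> v \in pts U -> v \in qpts A.
Proof. by move=> /oqP H; rewrite !inE => /andP [vU ->]; rewrite H. Qed.

Lemma XsP (alpha : {vspace vec n}) x : on_quadric A alpha ->
  reflect [/\ x \in qpts A, x \notin alpha & forall u, u \in alpha -> polar A u x = 0]
          (x \in Xs A alpha).
Proof.
move=> oa; rewrite /Xs inE; apply: (iffP idP).
  case/andP => xQ /andP [xa oax]; split=> //.
  by move: (xQ); rewrite qptsE => /andP [_ /eqP qx]; apply/(oq_addline oa qx).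
case=> xQ xa H; rewrite xQ xa /=.
by move: (xQ); rewrite qptsE => /andP [_ /eqP qx]; apply/(oq_addline oa qx).
Qed.

Lemma in_Xs (alpha S : {vspace vec n}) v : on_quadric A S -> (alpha <= S)%VS ->
  v \in S -> v \notin alpha -> v \in Xs A alpha.
Proof.
move=> oS aS vS va; rewrite /Xs inE va /=.
have vQ : v \in qpts A.
  apply: (pts_qpts oS); rewrite inE vS; apply: contraNneq va => ->; exact: mem0v.
rewrite vQ /=; apply: (oq_sub oS); by rewrite subv_add aS -memvE.
Qed.

Lemma Xs_not_switched alpha v : v \in Xs A alpha -> ~~ switched A alpha v.
Proof. by move=> vX; rewrite /switched /Ys inE vX. Qed.

Lemma alpha_not_switched (alpha : {vspace vec n}) v : on_quadric A alpha ->
  v \in alpha -> v != 0 -> (0 < #|Xs A alpha|)%N -> ~~ switched A alpha v.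
Proof.
move=> oa va v0 X0; rewrite /switched negb_and; apply/orP; right.
have vQ : v \in qpts A by rewrite qptsE v0 /= (oqP _ oa _ va).
have -> : [set x in Xs A alpha | adjG A v x] = Xs A alpha.
  apply/setP => x; rewrite inE; case xX: (x \in Xs A alpha) => //=.
  case/(XsP _ oa): xX => xQ xa H.
  rewrite adjG_E // H // andbT; apply: contraNneq xa => <-; exact: va.
set N := #|Xs A alpha|; apply/eqP; move: X0; lia.
Qed.

Lemma exists_out (alpha S : {vspace vec n}) : (alpha <= S)%VS ->
  (\dim alpha < \dim S)%N -> exists v, v \in S /\ v \notin alpha.
Proof.
move=> aS dlt.
have : [exists v, (v \in S) && (v \notin alpha)].
  apply: contraT => /existsPn H.
  have : (S <= alpha)%VS by apply/subvP => v vS; move: (H v); rewrite vS /= negbK.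
  move=> Sa; have := dimvS Sa; by rewrite leqNgt dlt.
by case/existsP => v /andP [vS va]; exists v.
Qed.

Lemma adjGsE alpha x y : x \in qpts A -> y \in qpts A -> x != y ->
  adjGs A alpha x y <->
  ((polar A x y == 0) (+) ((switched A alpha x && (y \in Xs A alpha)) ||
      (switched A alpha y && (x \in Xs A alpha)))).
Proof.
move=> xQ yQ xy; rewrite /adjGs adjG_E // xy /=; split; first by case.
by move=> H; split.
Qed.

Lemma card_pts (U : {vspace vec n}) : #|pts U| = (2 ^ \dim U - 1)%N.
Proof.
rewrite -(cardU U).
have -> : [set v : vec n | v \in U] = 0 |: pts U.
  apply/setP => v; rewrite !inE; case: (v =P 0) => [->|_] /=; by rewrite ?mem0v ?eqxx ?andbT.
by rewrite cardsU1 !inE eqxx andbF /= add1n subn1.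
Qed.

Lemma keyK (g : nat) (Pi S : {vspace vec n}) c v :
  (forall U, on_quadric A U -> (\dim U <= g.+1)%N) ->
  generator A g Pi -> generator A g S -> \dim (Pi :&: S) = g ->
  c \in Pi -> c \notin S -> v \in S -> v \notin Pi -> polar A c v != 0.
Proof.
move=> bnd [oP dP] [oS dS] dH cP cS vS vP; apply/negP => /eqP pcv.
have vH : v \notin (Pi :&: S)%VS by rewrite memv_cap negb_and vP.
have eS := addline_eq (capvSr Pi S) vS vH (etrans dS (congr1 succn (esym dH))).
have qc : qf A c = 0 by apply: (oqP _ oP).
have : on_quadric A (S + <[c]>)%VS.
  apply/(oq_addline oS qc) => u; rewrite -eS => /memv_addP [h hH [w /vlineP [k ->] ->]].
  rewrite polarC polarDr polarZr pcv mulr0 addr0.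
  by apply: (oq_polar oP cP); move: hH; rewrite memv_cap => /andP [].
by move=> /bnd; rewrite dim_addline // dS ltnn.
Qed.
Lemma F2_11 : (1 + 1 : 'F_2) = 0. Proof. by apply/val_inj. Qed.

Lemma switched_c (alpha : {vspace vec n}) c a : on_quadric A alpha ->
  c \in qpts A -> a \in alpha -> polar A c a != 0 ->
  c \notin Xs A alpha /\ switched A alpha c.
Proof.
move=> oa cQ aa pca.
have cX : c \notin Xs A alpha.
  by apply/negP => /(XsP _ oa) [_ _ H]; move: pca; rewrite polarC H ?eqxx.
split=> //; rewrite /switched /Ys inE cX cQ /=.
set X := Xs A alpha; set N := [set x in X | adjG A c x].
have pa1 : polar A c a = 1 by apply: F2_neq0.
have adjE x : x \in X -> adjG A c x = (polar A c x == 0).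
  move=> xX; have [xQ _ _] := XsP _ oa xX.
  rewrite adjG_E // (_ : c != x) //; apply: contraNneq cX => ->; exact: xX.
have fX x : x \in X -> x + a \in X.
  move=> xX; have [xQ xa H] := XsP _ oa xX.
  have xna : x + a \notin alpha.
    by apply: contra xa => xaa; rewrite -(addrK a x); apply: memvB.
  apply/(XsP _ oa); split=> //.
    rewrite qptsE; apply/andP; split.
      by apply: contraNneq xna => ->; exact: mem0v.
    move: xQ; rewrite qptsE => /andP [_ /eqP qx].
    by rewrite qfD qx (oqP _ oa _ aa) polarC H // !addr0.
  by move=> u ua; rewrite polarDr H // (oq_polar oa ua aa) addr0.
have fN x : (polar A c (x + a) == 0) = ~~ (polar A c x == 0).
  rewrite polarDr pa1; case: (F2_cases (polar A c x)) => ->.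
    by rewrite add0r oner_eq0 eqxx.
  by rewrite F2_11 eqxx oner_eq0.
have finj : injective (fun x : vec n => x + a) by apply: addIr.
have c1 : (#|N| <= #|X :\: N|)%N.
  rewrite -(card_imset _ finj); apply: subset_leq_card; apply/subsetP => y.
  case/imsetP => x; rewrite /N in_set => /andP [xX xN] ->.
  rewrite in_setD fX // andbT in_set fX //= adjE ?fX // fN -adjE // xN.
  done.
have c2 : (#|X :\: N| <= #|N|)%N.
  rewrite -(card_imset _ finj); apply: subset_leq_card; apply/subsetP => y.
  case/imsetP => x; rewrite in_setD /N in_set => /andP [xN xX] ->.
  rewrite in_set fX //= adjE ?fX // fN -adjE //; by move: xN; rewrite xX.
have c3 := cardsID N X.
have e : X :&: N = N by apply/setIidPr; apply/subsetP => x; rewrite /N in_set => /andP [].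
rewrite e in c3.
have e2 : #|X :\: N| = #|N| by apply/eqP; rewrite eqn_leq c2 c1.
by apply/eqP; rewrite -c3 e2 muln2 -addnn.
Qed.
Lemma not_sub_ex (U V : {vspace vec n}) : ~~ (U <= V)%VS -> exists v, v \in U /\ v \notin V.
Proof.
move=> nUV; have : [exists v, (v \in U) && (v \notin V)].
  apply: contraT => /existsPn H; apply: contraNT nUV => _.
  by apply/subvP => v vU; move: (H v); rewrite vU /= negbK.
by case/existsP => v /andP [vU vV]; exists v.
Qed.

Lemma oqE (U : {vspace vec n}) v : on_quadric A U -> v \in U -> qf A v = 0.
Proof. by move=> /oqP H /H. Qed.

Lemma cardsU_disj (X Y : {set vec n}) : (forall v, v \in X -> v \notin Y) ->
  #|X :|: Y| = (#|X| + #|Y|)%N.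
Proof.
move=> H; have e : X :&: Y = set0 by apply/setP => v; rewrite !inE; case vX: (v \in X) => //=; rewrite (negbTE (H v vX)).
by rewrite cardsU e cards0 subn0.
Qed.
End S.

Lemma arith1 g s k : (g.+1 + k = s.+1 + g -> k = s)%N.
Proof. lia. Qed.

Lemma arith2 (P G ca cb cc cu : nat) : (0 < P ->
  ca = P - 1 -> cc + G = 2 * G -> cb + cu = 2 * G -> cu + P = 2 * P + G ->
  ca + cb + cc = 2 * G - 1)%N.
Proof. lia. Qed.

Theorem lemma5p1 (n : nat) (A : 'M['F_2]_(n.+1)) (g s : nat)
  (alpha : {vspace vec n}) :
  nonsingular A -> proj_index A g -> (1 <= g)%N -> (s < g)%N ->
  on_quadric A alpha -> \dim alpha = s.+1 ->
  (* (A) *)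
  (forall Sigma : {vspace vec n},
     generator A g Sigma -> (alpha <= Sigma)%VS ->
     clique_Gs A alpha (pts Sigma) /\ #|pts Sigma| = (2 ^ g.+1 - 1)%N) /\
  (* (B) *)
  (forall Pi Sigma : {vspace vec n},
     generator A g Pi -> generator A g Sigma ->
     (alpha <= Sigma)%VS -> ~~ (alpha <= Pi)%VS ->
     \dim (Pi :&: Sigma) = g ->
     let Ca := pts (alpha :&: Pi) in
     let Cb := [set v in pts Sigma | (v \notin alpha) && (v \notin Pi)] in
     let Cc := [set v in pts Pi | v \notin Sigma] in
     clique_Gs A alpha (Ca :|: Cb :|: Cc) /\
     #|Ca :|: Cb :|: Cc| = (2 ^ g.+1 - 1)%N).
Proof.
move=> _ [_ bnd] g1 sg oa da.
have Xpos S : generator A g S -> (alpha <= S)%VS -> (0 < #|Xs A alpha|)%N.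
  move=> [oS dS] aS; have [|v [vS va]] := exists_out aS; first by rewrite da dS ltnS.
  by apply/card_gt0P; exists v; apply: (in_Xs oS aS).
have fa x : x \in alpha -> x != 0 -> (0 < #|Xs A alpha|)%N ->
    switched A alpha x = false /\ (x \in Xs A alpha) = false.
  move=> xa x0 Xp; split; first exact/negbTE/alpha_not_switched.
  by apply/negbTE/negP => /(XsP _ oa) [_ /negP].
split.
  move=> S [oS dS] aS; split; last by rewrite card_pts dS.
  have Xp := Xpos S (conj oS dS) aS.
  have swn v : v \in pts S -> switched A alpha v = false.
    rewrite inE => /andP [vS v0]; case va: (v \in alpha); first by case: (fa v va v0 Xp).
    by apply/negbTE/Xs_not_switched/(in_Xs oS aS vS); rewrite va.
  split; first by apply/subsetP => v; apply: pts_qpts.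
  move=> x y xP yP xy; apply/(adjGsE _ (pts_qpts oS xP) (pts_qpts oS yP) xy).
  rewrite (swn x xP) (swn y yP) /= addbF; apply/eqP; apply: (oq_polar oS).
    by move: xP; rewrite inE => /andP [].
  by move: yP; rewrite inE => /andP [].
move=> Pi S [oP dP] [oS dS] aS naP dH Ca Cb Cc.
have Xp := Xpos S (conj oS dS) aS.
have [a [aa aP]] := not_sub_ex naP.
have aS' : a \in S by apply: (subvP aS).
have fb x : x \in S -> x \notin alpha ->
    switched A alpha x = false /\ (x \in Xs A alpha) = true.
  by move=> xS xa; have xX := in_Xs oS aS xS xa; split => //; apply/negbTE/Xs_not_switched.
have fc x : x \in Pi -> x \notin S -> x != 0 ->
    switched A alpha x = true /\ (x \in Xs A alpha) = false.
  move=> xP xS x0.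
  have xQ : x \in qpts A by rewrite qptsE x0 (oqE oP xP) /=.
  have [] := switched_c oa xQ aa (keyK bnd (conj oP dP) (conj oS dS) dH xP xS aS' aP).
  by move=> /negbTE -> ->.
have cls x : x \in Ca :|: Cb :|: Cc ->
   [\/ [/\ x \in alpha, x \in Pi & x != 0],
       [/\ x \in S, x \notin alpha, x \notin Pi & x != 0] |
       [/\ x \in Pi, x \notin S & x != 0]].
  rewrite /Ca /Cb /Cc !inE memv_cap.
  case/orP => [/orP [] | ].
    by case/andP => /andP [? ?] ?; constructor 1.
  by case/andP => /andP [? ?] /andP [? ?]; constructor 2.
  by case/andP => /andP [? ?] ?; constructor 3.
have CQ x : x \in Ca :|: Cb :|: Cc -> x \in qpts A.
  case/cls => [[xa _ x0] | [xS _ _ x0] | [xP _ x0]].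
  - by rewrite qptsE x0 (oqE oa xa).
  - by rewrite qptsE x0 (oqE oS xS).
  - by rewrite qptsE x0 (oqE oP xP).
split.
  split; first by apply/subsetP => x; apply: CQ.
  move=> x y xC yC xy; apply/(adjGsE _ (CQ x xC) (CQ y yC) xy).
  case: (cls x xC) => [[xa xP x0] | [xS xa xP x0] | [xP xS x0]];
  case: (cls y yC) => [[ya yP y0] | [yS ya yP y0] | [yP yS y0]];
  rewrite ?(proj1 (fa x xa x0 Xp)) ?(proj2 (fa x xa x0 Xp))
          ?(proj1 (fa y ya y0 Xp)) ?(proj2 (fa y ya y0 Xp))
          ?(proj1 (fb x xS xa)) ?(proj2 (fb x xS xa))
          ?(proj1 (fb y yS ya)) ?(proj2 (fb y yS ya))
          ?(proj1 (fc x xP xS x0)) ?(proj2 (fc x xP xS x0))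
          ?(proj1 (fc y yP yS y0)) ?(proj2 (fc y yP yS y0)) /=;
  rewrite ?addbF ?addbT;
  try (by apply/eqP; apply: (oq_polar oP); assumption);
  try (by apply/eqP; apply: (oq_polar oS); first [assumption | exact: (subvP aS)]);
  try (by rewrite polarC (keyK bnd (conj oP dP) (conj oS dS) dH yP yS xS xP));
  try (by rewrite (keyK bnd (conj oP dP) (conj oS dS) dH xP xS yS yP)).
have dAH : \dim (alpha :&: Pi) = s.
  set H := (Pi :&: S)%VS.
  have e1 : (alpha :&: Pi = alpha :&: H)%VS.
    rewrite /H capvA; apply/esym/capv_idPl; exact: subv_trans (capvSl _ _) aS.
  have d2 : \dim (alpha + H) = g.+1.
    apply/eqP; rewrite eqn_leq -{1}dS (dimvS (_ : alpha + H <= S)%VS); last first.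
      by rewrite subv_add aS capvSr.
    rewrite -dH (ltn_leqif (dimv_leqif_eq (addvSr alpha H))).
    apply: contra naP => /eqP eH; apply: subv_trans (capvSl Pi S).
    by rewrite -/H eH addvSl.
  have := dimv_sum_cap alpha H; rewrite d2 da -e1 /H dH; exact: arith1.
pose VS := [set v : vec n | v \in S]; pose VP := [set v : vec n | v \in Pi].
pose VA := [set v : vec n | v \in alpha].
pose VH := [set v : vec n | v \in (Pi :&: S)%VS].
pose VAH := [set v : vec n | v \in (alpha :&: Pi)%VS].
have cVS : #|VS| = (2 ^ g.+1)%N by rewrite /VS cardU dS.
have cVP : #|VP| = (2 ^ g.+1)%N by rewrite /VP cardU dP.
have cVA : #|VA| = (2 ^ s.+1)%N by rewrite /VA cardU da.
have cVH : #|VH| = (2 ^ g)%N by rewrite /VH cardU dH.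
have cVAH : #|VAH| = (2 ^ s)%N by rewrite /VAH cardU dAH.
have cCa : #|Ca| = (2 ^ s - 1)%N by rewrite /Ca card_pts dAH.
have eCc : Cc = VP :\: VS.
  apply/setP => v; rewrite /Cc /VP /VS !inE; case vS: (v \in S) => /=; first by rewrite andbF.
  rewrite andbT; case: (v =P 0) => [v0|] /=; last by rewrite andbT.
  by move: vS; rewrite v0 mem0v.
have eVPS : VP :&: VS = VH by apply/setP => v; rewrite !inE memv_cap.
have cCc : (#|Cc| + #|VH| = #|VP|)%N by rewrite eCc -eVPS addnC cardsID.
have eCb : Cb = VS :\: (VA :|: VH).
  apply/setP => v; rewrite /Cb /VS /VA /VH !inE memv_cap.
  case vS: (v \in S); case va: (v \in alpha); case vP: (v \in Pi); rewrite /= ?andbF ?andbT //.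
  by case: (v =P 0) => [v0|] //; move: va; rewrite v0 mem0v.
have eVSU : VS :&: (VA :|: VH) = VA :|: VH.
  apply/setIidPr/subsetP => w; rewrite !inE memv_cap => /orP [wa | /andP [_ //]].
  exact: (subvP aS).
have cCb : (#|Cb| + #|VA :|: VH| = #|VS|)%N by rewrite eCb -{2}eVSU addnC cardsID.
have eAH : VA :&: VH = VAH.
  apply/setP => v; rewrite !inE !memv_cap; case va: (v \in alpha) => //=.
  by rewrite (subvP aS _ va) andbT.
have cU : (#|VA :|: VH| + #|VAH| = #|VA| + #|VH|)%N by rewrite -eAH cardsUI.
have d1 : forall v, v \in Ca -> v \notin Cb.
  by move=> v; rewrite /Ca /Cb !inE memv_cap => /andP [/andP [va _] _]; rewrite va /= andbF.
have d2 : forall v, v \in Ca :|: Cb -> v \notin Cc.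
  move=> v; rewrite /Ca /Cb /Cc !inE memv_cap => /orP [/andP [/andP [va _] _] | /andP [/andP [vS _] _]].
    by rewrite (subvP aS _ va) andbF.
  by rewrite vS andbF.
rewrite (cardsU_disj d2) (cardsU_disj d1).
move: cCa cCc cCb cU; rewrite cVS cVP cVA cVH cVAH !expnS.
have : (0 < 2 ^ s)%N by rewrite expn_gt0.
exact: arith2.
Qed.
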